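(* There exists a compact set $K\subset\mathbb{R}^2$ with positive two-dimensional Lebesgue measure such that $K+S^1$ has empty interior.
   Context: $S^1$ is the Euclidean unit circle in $\mathbb{R}^2$; $X+Y=\{x+y:x\in X,y\in Y\}$. *)

(* Defs.v *)
From HB Require Import structures.
From mathcomp Require Import all_boot all_order all_algebra.
From mathcomp Require Import all_classical all_reals all_analysis.
Set Implicit Arguments. Unset Strict Implicit. Unset Printing Implicit Defensive.
Import Order.TTheory GRing.Theory Num.Theory.
Import numFieldNormedType.Exports.
Local Open Scope classical_set_scope.
Local Open Scope ring_scope.

Definition circle {R : realType} : set (R * R) :=
  [set p | p.1 ^+ 2 + p.2 ^+ 2 = 1].

Definition minkowski_sum (R : realType) (X Y : set (R * R)) : set (R * R) :=
  [set z | exists x y, X x /\ Y y /\ z = (x.1 + y.1, x.2 + y.2)].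

Definition lebesgue2 (R : realType) (A : set (R * R)) : \bar R :=
  ((@lebesgue_measure R) \x (@lebesgue_measure R))%E A.

Definition measurable_R2 (R : realType) (A : set (R * R)) : Prop :=
  measurable (A : set (g_sigma_algebraType (R.-ocitv.-measurable) * g_sigma_algebraType (R.-ocitv.-measurable))).

(* Main.v *)
Require Import Defs.
From HB Require Import structures.
From mathcomp Require Import all_boot all_order all_algebra.
From mathcomp Require Import all_classical all_reals all_analysis.
From mathcomp Require Import ring lra.
Import Order.TTheory GRing.Theory Num.Theory.
Import numFieldNormedType.Exports.
Local Open Scope classical_set_scope.
Local Open Scope ring_scope.
Definition dist2 {R : realType} (c p : R * R) : R := (p.1 - c.1) ^+ 2 + (p.2 - c.2) ^+ 2.

Lemma dist2_meas (R : realType) (c : R * R) :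
  measurable_fun [set: measurableTypeR R * measurableTypeR R] (dist2 c).
Proof.
apply: measurable_realfun.measurable_funD; apply: measurable_realfun.measurable_funX; apply: measurable_realfun.measurable_funB.
- exact: measurable_fst.
- exact: measurable_cst.
- exact: measurable_snd.
- exact: measurable_cst.
Qed.

Lemma preimage_meas (R : realType) (c : R * R) (B : set R) : measurable B ->
  measurable_R2 (dist2 c @^-1` B).
Proof.
move=> mB; rewrite /measurable_R2.
have := @dist2_meas R c measurableT B mB. by rewrite setTI.
Qed.

Lemma dist2_cont (R : realType) (c : R * R) : continuous (dist2 c).
Proof.
move=> p. rewrite /dist2.
apply: cvgD; apply: cvgM; apply: cvgB; try exact: cvg_cst.
all: first [exact: cvg_fst | exact: cvg_snd].
Qed.

Definition circ {R : realType} (c : R * R) : set (R * R) := dist2 c @^-1` [set 1].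

Lemma circ_meas (R : realType) (c : R * R) : measurable_R2 (circ c).
Proof. exact: (@preimage_meas R c _ (measurable_set1 _)). Qed.

Lemma circ_null (R : realType) (c : R * R) : lebesgue2 (circ c) = 0%E.
Proof.
rewrite /lebesgue2 /= /product_measure1.
apply: integral0_eq. move=> x _ /=.
set s := Num.sqrt (1 - (x - c.1) ^+ 2).
have sub : xsection (circ c) x `<=` [set c.2 + s] `|` [set c.2 - s].
  move=> y; rewrite /xsection /= inE /circ /dist2 /= => h.
  have e : (y - c.2) ^+ 2 = 1 - (x - c.1) ^+ 2 by rewrite -h; ring.
  have : `|y - c.2| = s by rewrite /s -e sqrtr_sqr.
  case: (ltrP (y - c.2) 0) => hy.
    rewrite ltr0_norm // => hs; right; rewrite /= -hs; ring.
  rewrite ger0_norm // => hs; left; rewrite /= -hs; ring.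
apply/eqP; rewrite eq_le measure_ge0 andbT.
have m1 : measurable (xsection (circ c) x) by exact: (measurable_xsection _ (@circ_meas R c)).
have m2 : measurable ([set c.2 + s] `|` [set c.2 - s] : set (measurableTypeR R)).
  by apply: measurableU; exact: measurable_set1.
apply: (le_trans (le_measure lebesgue_measure _ _ sub)); rewrite ?inE //.
apply: (le_trans (measureU2 lebesgue_measure (measurable_set1 _) (measurable_set1 _))).
have z1 := lebesgue_measure_set1 (c.2 + s). have z2 := lebesgue_measure_set1 (c.2 - s). rewrite -[leRHS](adde0 0%E); apply: leeD; rewrite le_eqVlt; apply/orP; left; apply/eqP; [exact: z1 | exact: z2].
Qed.

Definition annulus {R : realType} (c : R * R) (d : R) : set (R * R) :=
  dist2 c @^-1` `](1 - d), (1 + d)[%classic.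

Definition Qsq (R : realType) : set (R * R) := `[(0:R), 1]%classic `*` `[(0:R), 1]%classic.

Lemma Qsq_meas (R : realType) : measurable_R2 (Qsq R).
Proof. by apply: measurableX; exact: measurable_itv. Qed.

Lemma Qsq_measure (R : realType) : lebesgue2 (Qsq R) = 1%E.
Proof.
rewrite /lebesgue2 /Qsq product_measure1E; try exact: measurable_itv.
have h : (@lebesgue_measure R `[(0:R), 1]%classic = 1%E).
  by rewrite lebesgue_measure_itv /= lte01 EFinN sube0.
by transitivity (1%E * 1%E : \bar R)%E; [congr (_ * _)%E; exact: h | rewrite mule1].
Qed.

Lemma annulus_meas (R : realType) c (d : R) : measurable_R2 (annulus c d).
Proof. exact: (@preimage_meas R c _ (measurable_itv _)). Qed.

Lemma small_annulus (R : realType) (c : R * R) (eps : R) : 0 < eps ->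
  exists d : R, 0 < d /\ (lebesgue2 (annulus c d `&` Qsq R) < eps%:E)%E.
Proof.
move=> eps0.
pose F k := annulus c (k.+1%:R^-1) `&` Qsq R.
have mF k : measurable_R2 (F k).
  apply: measurableI; [exact: annulus_meas | exact: Qsq_meas].
have mcap : measurable_R2 (\bigcap_k F k) by apply: bigcapT_measurable => k; exact: mF.
have capsub : \bigcap_k F k `<=` circ c.
  move=> p Fp; rewrite /circ /=; apply/eqP; apply/negPn/negP => hne.
  have : 0 < `|dist2 c p - 1| by rewrite normr_gt0 subr_eq0.
  move=> /ltr_add_invr [k]; rewrite add0r => hk.
  have [+ _] := Fp k I; rewrite /annulus /= in_itv /= => /andP [h1 h2].
  have : `|dist2 c p - 1| < k.+1%:R^-1.
    move: (k.+1%:R^-1) h1 h2 => a h1 h2.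
    rewrite ltr_norml; apply/andP; split; lra.
  by move/(lt_trans hk); rewrite ltxx.
have cap0 : lebesgue2 (\bigcap_k F k) = 0%E.
  apply/eqP; rewrite eq_le measure_ge0 andbT -(@circ_null R c).
  by apply: le_measure => //; rewrite inE //; exact: (@circ_meas R c).
have fin : (lebesgue2 (F 0%N) < +oo)%E.
  apply: (le_lt_trans (le_measure _ _ _ _)); rewrite ?inE.
  - exact: mF.
  - exact: Qsq_meas.
  - exact: subIsetr.
  by move: (Qsq_measure R); rewrite /lebesgue2 /= => ->; rewrite ltry.
have noninc : {homo F : n m / (n <= m)%N >-> (m <= n)%O}.
  move=> n m nm; apply/subsetPset => p [hp hq]; split => //.
  have hle : m.+1%:R^-1 <= n.+1%:R^-1 :> R.
    by rewrite lef_pV2 ?posrE ?ltr0n // ler_nat ltnS.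
  move: hp; rewrite /annulus /= !in_itv /= => /andP [h1 h2].
  move: (m.+1%:R^-1) (n.+1%:R^-1) hle h1 h2 => a b hle h1 h2.
  apply/andP; split; lra.
have cvg := nonincreasing_cvg_mu fin mF mcap noninc.
have [k hk] : exists k, (lebesgue2 (F k) < eps%:E)%E.
  apply: contrapT => /forallNP H.
  have : (eps%:E <= lebesgue2 (\bigcap_k F k))%E.
    apply: (cvge_ge _ cvg); apply: nearW => k.
    rewrite leNgt; apply/negP => h; apply: (H k); exact: h.
  by rewrite cap0 lee_fin leNgt eps0.
exists k.+1%:R^-1; split; [by rewrite invr_gt0 ltr0n | exact hk].
Qed.

Definition center {R : realType} (n : nat) : R * R :=
  match (unpickle n : option (rat * rat)) with
  | Some q => (ratr q.1, ratr q.2)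
  | None => (0, 0)
  end.

Lemma center_pickle (R : realType) (q : rat * rat) :
  center (pickle q) = (ratr q.1, ratr q.2) :> R * R.
Proof. by rewrite /center pickleK. Qed.

Lemma annulus_open (R : realType) (c : R * R) d : open (annulus c d).
Proof.
apply: open_comp; last exact: itv_open.
by move=> p _; exact: dist2_cont.
Qed.

Theorem mainTheorem10 (R : realType) :
  exists K : set (R * R),
    [/\ compact K, measurable_R2 K, (0 < lebesgue2 K)%E &
        interior (minkowski_sum K circle) = set0].
Proof.
have hd : forall n : nat, exists d : R, 0 < d /\
    (lebesgue2 (annulus (center n) d `&` Qsq R) < ((1/2) / (2 ^ n.+1)%:R)%:E)%E.
  move=> n; apply: small_annulus; apply: divr_gt0 => //; exact: ltr0n.
have [d hdP] := choice hd.
pose U := \bigcup_n annulus (center n) (d n).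
exists (Qsq R `\` U); split.
- rewrite setDE; apply: compact_closedI.
    by apply: compact_setX; exact: segment_compact.
  apply: open_closedC; apply: bigcup_open => n _; exact: annulus_open.
- apply: measurableD; first exact: Qsq_meas.
  by apply: bigcup_measurable => n _; exact: annulus_meas.
- pose A n := annulus (center n) (d n) `&` Qsq R.
  have mA n : measurable_R2 (A n).
    by apply: measurableI; [exact: annulus_meas | exact: Qsq_meas].
  have mK : measurable_R2 (Qsq R `\` U).
    apply: measurableD; first exact: Qsq_meas.
    by apply: bigcup_measurable => n _; exact: annulus_meas.
  have mUA : measurable_R2 (\bigcup_n A n).
    by apply: bigcup_measurable => n _; exact: mA.
  have sub : Qsq R `<=` (Qsq R `\` U) `|` \bigcup_n A n.
    move=> z Qz; have [Uz|nUz] := pselect (U z).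
      by right; case: Uz => n _ hn; exists n.
    by left.
  have h1 : (lebesgue2 (Qsq R) <= lebesgue2 (Qsq R `\` U) + lebesgue2 (\bigcup_n A n))%E.
    apply: le_trans; last exact: (measureU2 _ mK mUA).
    apply: le_measure; rewrite ?inE //; [exact: Qsq_meas | exact: measurableU].
  have h2 : (lebesgue2 (\bigcup_n A n) <= (1/2)%:E)%E.
    apply: le_trans.
      exact: (@measure_sigma_subadditive _ _ _ (@lebesgue_measure R \x @lebesgue_measure R)%E
        (\bigcup_n A n) A mA mUA (@subset_refl _ _)).
    apply: le_trans; last exact: (epsilon_trick0 xpredT (_ : 0 <= 1/2)).
    apply: lee_nneseries; first by move=> n _ _; exact: measure_ge0.
    by move=> n _; apply: ltW; case: (hdP n).
  rewrite Qsq_measure in h1.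
  rewrite lt_neqAle measure_ge0 andbT; apply/eqP => K0.
  rewrite -K0 add0e in h1.
  have := le_trans h1 h2; rewrite lee_fin; lra.
- rewrite -subset0 => p ip.
  have /nbhs_ballP [e e0 be] := ip.
  have e0' : 0 < e := e0.
  have l1 : p.1 - e < p.1 + e by lra.
  have l2 : p.2 - e < p.2 + e by lra.
  have [q1 hq1] := rat_in_itvoo l1.
  have [q2 hq2] := rat_in_itvoo l2.
  have := be (center (pickle (q1, q2))).
  rewrite center_pickle /=.
  have hb : ball p e (ratr q1, ratr q2).
    move: hq1 hq2; rewrite !in_itv /= => /andP[a1 b1] /andP[a2 b2].
    split; rewrite /ball /= ltr_norml; apply/andP; split; lra.
  move=> /(_ hb) [x [y [[Qx nU] [cy hxy]]]].
  apply: nU; exists (pickle (q1, q2)) => //.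
  rewrite /annulus center_pickle /= in_itv /=.
  have -> : dist2 (ratr q1, ratr q2) x = 1.
    rewrite /dist2 /=; case: hxy => -> ->; rewrite /circle /= in cy.
    rewrite -cy; ring.
  have := (hdP (pickle (q1, q2))).1 => h.
  apply/andP; split; lra.
Qed.
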